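(* Let $D$ be a directed acyclic graph, let $M_1,M_2$ be disjoint sets of vertices of $D$, and let $Z$ be a set of vertices of $D$. If (a) $M_1\cup M_2\cup \bigl(V(D)-(\mathrm{Out}(M_1)\cup \mathrm{In}(M_1)\cup \mathrm{In}(M_2))\bigr)$ is an independent set, (b) $\mathrm{Out}(M_1)\subseteq Z$, (c) $Z\cap \mathrm{In}(M_1)=M_1$, and (d) $Z\cap \mathrm{In}(M_2)=\emptyset$, then $Z$ is a closed set.
   Context: For a set $X$ of vertices of a digraph $D$: $\mathrm{Out}(X)$ is the set of vertices $y$ such that there is a directed path (possibly of length $0$) from a vertex of $X$ to $y$, and $\mathrm{In}(X)$ is the set of vertices $y$ such that there is a directed path (possibly of length $0$) from $y$ to a vertex of $X$. A set $X$ is independent if the induced subgraph $D[X]$ has no arcs, and closed if $D$ has no arc from a vertex of $X$ to a vertex outside $X$. *)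

(* Defs.v *)
From mathcomp Require Import all_boot.
Set Implicit Arguments. Unset Strict Implicit. Unset Printing Implicit Defensive.

(* A digraph D is given by a finite vertex type T and an arc relation e : rel T
   (e x y means there is an arc x -> y). *)

Definition acyclic (T : finType) (e : rel T) : Prop :=
  forall x y, e x y -> ~~ connect e y x.

Definition Out (T : finType) (e : rel T) (X : {set T}) : {set T} :=
  [set y | [exists x in X, connect e x y]].

Definition In (T : finType) (e : rel T) (X : {set T}) : {set T} :=
  [set y | [exists x in X, connect e y x]].

Definition independent (T : finType) (e : rel T) (X : {set T}) : Prop :=
  forall x y, x \in X -> y \in X -> ~~ e x y.

Definition closed_set (T : finType) (e : rel T) (X : {set T}) : Prop :=
  forall x y, x \in X -> e x y -> y \in X.

(* Main.v *)
Require Import Defs.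
From mathcomp Require Import all_boot.

Theorem lemma5p3 (T : finType) (e : rel T) (M1 M2 Z : {set T}) :
  acyclic e ->
  [disjoint M1 & M2] ->
  independent e (M1 :|: M2 :|: ~: (Out e M1 :|: In e M1 :|: In e M2)) ->
  Out e M1 \subset Z ->
  Z :&: In e M1 = M1 ->
  Z :&: In e M2 = set0 ->
  closed_set e Z.
Proof.
move=> _ _ Hind HO H1 H2 x y xZ exy.
have cxy : connect e x y by apply: connect1.
have InOut : forall X u v, connect e u v -> v \in In e X -> u \in In e X.
  move=> X u v cuv; rewrite !inE => /exists_inP [w wX cvw].
  by apply/exists_inP; exists w => //; apply: connect_trans cuv cvw.
case xO: (x \in Out e M1).
  apply: (subsetP HO); move: xO; rewrite !inE => /exists_inP [w wX cwx].
  by apply/exists_inP; exists w => //; apply: connect_trans cwx cxy.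
have xI2 : x \notin In e M2.
  apply/negP => xI; have : x \in Z :&: In e M2 by rewrite inE xZ xI.
  by rewrite H2 inE.
have xI1 : x \notin In e M1.
  apply/negP => xI; have : x \in Z :&: In e M1 by rewrite inE xZ xI.
  rewrite H1 => xM; move/negbT: xO; rewrite inE => /negP; apply.
  by apply/exists_inP; exists x.
case yO: (y \in Out e M1); first by apply: (subsetP HO).
have yI1 : y \notin In e M1.
  by apply/negP => yI; move/negP: xI1; apply; apply: InOut cxy yI.
have yI2 : y \notin In e M2.
  by apply/negP => yI; move/negP: xI2; apply; apply: InOut cxy yI.
have xS : x \in M1 :|: M2 :|: ~: (Out e M1 :|: In e M1 :|: In e M2).
  by rewrite in_setU in_setC !in_setU xO (negbTE xI1) (negbTE xI2) orbT.
have yS : y \in M1 :|: M2 :|: ~: (Out e M1 :|: In e M1 :|: In e M2).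
  by rewrite in_setU in_setC !in_setU yO (negbTE yI1) (negbTE yI2) orbT.
by have := Hind x y xS yS; rewrite exy.
Qed.
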